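(* Let $k\ge 3$ and $\ell\ge 1$ be integers. For all integers $n$ with $$n\ge 2\frac{(\ell(k-1)+k)^4-1}{(\ell+1)(k-1)}-1,$$ we have $px_{k,\ell}(K_n)=2$.
   Context: All graphs are finite, simple and undirected. An edge-coloring of a graph may assign the same color to adjacent edges. A tree $T$ in an edge-colored graph is a proper tree if no two adjacent edges of $T$ receive the same color. For $S\subseteq V(G)$ with $|S|\ge 2$, an $S$-tree is a tree in $G$ containing all vertices of $S$. $S$-trees $T_1,\dots,T_\ell$ are internally disjoint if $E(T_i)\cap E(T_j)=\emptyset$ and $V(T_i)\cap V(T_j)=S$ for all $i\ne j$. For a connected graph $G$ of order $n$ and integers $k,\ell$ with $2\le k\le n$ and $1\le \ell\le \kappa_k(G)$ (where $\kappa_k(G)$ is the minimum, over all $k$-subsets $S$ of $V(G)$, of the maximum number of internally disjoint $S$-trees), the $(k,\ell)$-proper index $px_{k,\ell}(G)$ is the minimum number of colors in an edge-coloring of $G$ such that for every $k$-subset $S$ of $V(G)$ there exist $\ell$ internally disjoint proper $S$-trees. *)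

(* Defs.v *)
(* The complete graph K_n has vertex set 'I_n and edge set
   all 2-element subsets of 'I_n. Edges are represented as {set 'I_n}. *)
From mathcomp Require Import all_boot all_order all_algebra.
Set Implicit Arguments. Unset Strict Implicit. Unset Printing Implicit Defensive.

Section Defs.
Variable n : nat.
Notation V := 'I_n.

Definition is_edge (e : {set V}) : bool := #|e| == 2.

Definition subgraph_ok (VT : {set V}) (ET : {set {set V}}) : bool :=
  [forall e in ET, is_edge e && (e \subset VT)].

Definition adj (ET : {set {set V}}) : rel V :=
  fun x y => (x != y) && ([set x; y] \in ET).

Definition sg_connected (VT : {set V}) (ET : {set {set V}}) : Prop :=
  forall x y, x \in VT -> y \in VT -> connect (adj ET) x y.

Definition sg_acyclic (VT : {set V}) (ET : {set {set V}}) : Prop :=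
  forall s : seq V, uniq s -> 3 <= size s -> all (mem VT) s ->
    ~~ cycle (adj ET) s.

Definition is_tree (VT : {set V}) (ET : {set {set V}}) : Prop :=
  [/\ VT != set0, subgraph_ok VT ET, sg_connected VT ET & sg_acyclic VT ET].

Definition proper_tree (c : nat) (col : {set V} -> 'I_c)
    (VT : {set V}) (ET : {set {set V}}) : Prop :=
  is_tree VT ET /\
  forall e1 e2, e1 \in ET -> e2 \in ET -> e1 != e2 ->
    e1 :&: e2 != set0 -> col e1 != col e2.

Definition S_tree (S VT : {set V}) (ET : {set {set V}}) : Prop :=
  is_tree VT ET /\ S \subset VT.

Definition kl_proper_coloring (k l c : nat) (col : {set V} -> 'I_c) : Prop :=
  forall S : {set V}, #|S| = k ->
    exists T : 'I_l -> {set V} * {set {set V}},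
      (forall i, S_tree S (T i).1 (T i).2 /\ proper_tree col (T i).1 (T i).2) /\
      (forall i j, i != j ->
         (T i).2 :&: (T j).2 = set0 /\ (T i).1 :&: (T j).1 = S).

Definition kl_colorable (k l c : nat) : Prop :=
  exists col : {set V} -> 'I_c, kl_proper_coloring k l col.

Definition px_complete_eq (k l c : nat) : Prop :=
  kl_colorable k l c /\ forall c', kl_colorable k l c' -> c <= c'.

End Defs.

(* Main.v *)
Require Import Defs.
From mathcomp Require Import all_boot all_order all_algebra.
From mathcomp Require Import zify ring lra.
Set Implicit Arguments. Unset Strict Implicit. Unset Printing Implicit Defensive.

Section Gen.
Variable n : nat.
Notation V := 'I_n.

Fixpoint edges (s : seq V) : seq {set V} :=
  match s with
  | x :: ((y :: _) as r) => [set x; y] :: edges r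
  | _ => [::]
  end.

Lemma edges_cons2 (x y : V) r : edges [:: x, y & r] = [set x; y] :: edges (y :: r).
Proof. by []. Qed.
Arguments edges : simpl never.

Lemma edgesP x0 (w : seq V) e :
  reflect (exists2 t, t.+1 < size w & e = [set nth x0 w t; nth x0 w t.+1])
          (e \in edges w).
Proof.
elim: w => [|x w IH]; first by rewrite in_nil; constructor; case.
case: w IH => [|y r] IH; first by rewrite in_nil; constructor; case.
have -> : edges [:: x, y & r] = [set x; y] :: edges (y :: r) by [].
rewrite in_cons; apply: (iffP orP).
- case=> [|H]; [by move/eqP->; exists 0 | move: H => /IH [t Ht ->]].
  by exists t.+1.
- case=> [[|t]] Ht He; [by left; rewrite He | right; apply/IH; by exists t].
Qed.

Lemma adj_sym (ET : {set {set V}}) : symmetric (adj ET).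
Proof. by move=> x y; rewrite /adj eq_sym setUC. Qed.

Lemma exists_max (f : V -> nat) (s : seq V) : s != [::] ->
  exists2 m, m \in s & forall y, y \in s -> f y <= f m.
Proof.
elim: s => [|x s IH] // _.
case: (altP (s =P [::])) => [->|/IH [m Hm Hmax]].
  by exists x => [|y]; rewrite ?inE // => /eqP->.
case: (leqP (f x) (f m)) => H.
  exists m; first by rewrite inE Hm orbT.
  by move=> y; rewrite inE => /orP[/eqP->|/Hmax].
exists x; first by rewrite inE eqxx.
move=> y; rewrite inE => /orP[/eqP->//|/Hmax Hy]; exact: leq_trans Hy (ltnW H).
Qed.

Lemma edge_nth (x0 : V) (w : seq V) t : uniq w -> t.+1 < size w ->
  nth x0 w t != nth x0 w t.+1.
Proof.
move=> Hu Ht; rewrite nth_uniq //; [by rewrite eqn_leq ltnn andbF | exact: ltnW].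
Qed.

Lemma adj_index (x0 : V) (w : seq V) a b : uniq w ->
  adj [set e in edges w] a b ->
  [/\ a \in w, b \in w & (index b w == (index a w).+1) || (index a w == (index b w).+1)].
Proof.
move=> Hu /andP [Hab]; rewrite inE => /(edgesP x0) [t Ht Heq].
have Ha : a \in [set nth x0 w t; nth x0 w t.+1] by rewrite -Heq !inE eqxx.
have Hb : b \in [set nth x0 w t; nth x0 w t.+1] by rewrite -Heq !inE eqxx orbT.
have I0 : index (nth x0 w t) w = t by rewrite index_uniq // ltnW.
have I1 : index (nth x0 w t.+1) w = t.+1 by rewrite index_uniq.
have M0 : nth x0 w t \in w by rewrite mem_nth // ltnW.
have M1 : nth x0 w t.+1 \in w by rewrite mem_nth.
move: Ha Hb Hab; rewrite !inE => /orP[]/eqP-> /orP[]/eqP->; rewrite ?eqxx //;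
  by rewrite I0 I1 ?eqxx ?orbT.
Qed.

Lemma path_tree (x0 : V) (w : seq V) : w != [::] -> uniq w ->
  is_tree [set x in w] [set e in edges w].
Proof.
move=> Hne Hu; split.
- case: w Hne {Hu} => [|x w] // _; apply/set0Pn; exists x; by rewrite inE mem_head.
- apply/forall_inP => e; rewrite inE => /(edgesP x0) [t Ht ->].
  rewrite /is_edge cards2 edge_nth //=.
  apply/subsetP => z; rewrite !inE => /orP[]/eqP->; rewrite mem_nth // ltnW //.
- have Hp : forall w : seq V, uniq w ->
     path (fun a b => (a != b) && ([set a; b] \in edges w)) (head x0 w) (behead w).
    elim=> [|x r IH] //; case: r IH => [|y r] IH // /andP [Hx Hr].
    rewrite edges_cons2 /= in_cons eqxx /=.
    rewrite andbT; apply/andP; split; first by apply: contraNneq Hx => ->; rewrite mem_head.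
    apply: sub_path (IH Hr) => a b /andP [-> H]; by rewrite in_cons H orbT.
  have Hc : forall y, y \in w -> connect (adj [set e in edges w]) (head x0 w) y.
    move=> y Hy; apply: (path_connect (p := behead w)).
      apply: sub_path (Hp w Hu) => a b /andP [H1 H2]; by rewrite /adj H1 inE H2.
    by case: w Hne Hu Hy {Hp} => [|z w].
  move=> x y; rewrite !inE => Hx Hy.
  have Hs := sym_connect_sym (adj_sym [set e in edges w]).
  apply: connect_trans (Hc _ Hy); rewrite Hs; exact: Hc.
- move=> s Hus Hsz /allP Hall; apply/negP => Hcyc.
  have [m Hm Hmax] := exists_max (fun z => index z w) (s := s) ltac:(by case: s Hsz {Hus Hall Hcyc}).
  have := rot_index Hm; set s' := _ :: _ => Hrot.
  have Hus' : uniq s' by rewrite -Hrot rot_uniq.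
  have Hcyc' : cycle (adj [set e in edges w]) s' by rewrite -Hrot rot_cycle.
  have Hsz' : 3 <= size s' by rewrite -Hrot size_rot.
  have Hmem : forall z, z \in s' -> z \in s by move=> z; rewrite -Hrot mem_rot.
  move: Hus' Hcyc' Hsz' Hmem; rewrite /s'; move: (drop _ _ ++ _) => u.
  case: u => [|a [|b v]] // Hu' Hc _ Hmem.
  have /andP [/andP [Hma _] Hlm] : path (adj [set e in edges w]) m [:: a, b & v]
      && adj [set e in edges w] (last m [:: a, b & v]) m by rewrite -rcons_path.
  change (last m [:: a, b & v]) with (last b v) in Hlm.
  have [_ _ H1] := adj_index x0 Hu Hma.
  have [_ _ H2] := adj_index x0 Hu Hlm.
  have Ha := Hmax a (Hmem a ltac:(by rewrite !inE eqxx orbT)).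
  have Hl : last b v \in s by apply: Hmem; rewrite 2!in_cons mem_last !orbT.
  have Hl2 := Hmax _ Hl.
  have Eq : index a w = index (last b v) w by move: H1 H2 Ha Hl2; lia.
  have Ma : a \in w by have [] := adj_index x0 Hu Hma.
  have Ml : last b v \in w by have [] := adj_index x0 Hu Hlm.
  have Eq2 : a = last b v by apply: (index_inj x0 Ma Ml).
  move: Hu' => /= /and3P [_ Ha' _]; move: Ha'; by rewrite Eq2 mem_last.
Qed.

Definition pcol (e : {set V}) : 'I_2 := inord (odd (\sum_(x in e) (x : nat))).

Lemma col2 (a b : V) : a != b -> (pcol [set a; b] : nat) = odd a (+) odd b.
Proof.
move=> Hab; rewrite /pcol big_setU1 ?inE // big_set1 inordK.
  by rewrite oddD.
by case: (odd _).
Qed.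

Lemma path_proper (x0 : V) w : uniq w ->
  (forall t, t.+2 < size w -> odd (nth x0 w t) != odd (nth x0 w t.+2)) ->
  forall e1 e2, e1 \in [set e in edges w] -> e2 \in [set e in edges w] ->
    e1 != e2 -> e1 :&: e2 != set0 -> pcol e1 != pcol e2.
Proof.
move=> Hu Halt.
have Hc : forall t, t.+2 < size w ->
    pcol [set nth x0 w t; nth x0 w t.+1] != pcol [set nth x0 w t.+1; nth x0 w t.+2].
  move=> t Ht; apply/negP => /eqP /(congr1 (@nat_of_ord 2)).
  rewrite !col2 ?edge_nth // 1?ltnW //.
  by have := Halt t Ht; case: odd; case: odd; case: odd.
move=> e1 e2; rewrite !inE => /(edgesP x0) [t Ht ->] /(edgesP x0) [u Hu2 ->] Hne.
move=> /set0Pn [z]; rewrite !inE => /andP [Hz1 Hz2].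
have E : forall i j, i < size w -> j < size w -> nth x0 w i = nth x0 w j -> i = j.
  by move=> i j Hi Hj /eqP; rewrite nth_uniq // => /eqP.
move: Hz1 Hz2 => /orP [] /eqP -> /orP [] /eqP /E H.
- have {}H := H (ltnW Ht) (ltnW Hu2); subst u. idtac "B1". by rewrite eqxx in Hne.
- have {}H := H (ltnW Ht) Hu2; subst t. rewrite eq_sym. exact: Hc.
- have {}H := H Ht (ltnW Hu2); subst u. exact: Hc.
- have {}H := H Ht Hu2; case: H => H; subst u. by rewrite eqxx in Hne.
Qed.



Section Build.
Variable S : {set V}.
Variable f : nat -> bool -> nat -> V.
Variable J : nat.
Hypothesis Hf : forall j b t, j < J -> t < 2 -> odd (f j b t) = b /\ f j b t \notin S.
Hypothesis Hinj : forall j j' b b' t t', j < J -> j' < J -> t < 2 -> t' < 2 ->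
  f j b t = f j' b' t' -> [/\ j = j', b = b' & t = t'].

Fixpoint build (j : nat) (s : seq V) : seq V :=
  match s with
  | a :: ((b :: _) as r) =>
      if odd a != odd b then a :: f j (odd a) 0 :: build j.+1 r
      else [:: a, f j (odd a) 0, f j (~~ odd a) 0, f j (~~ odd a) 1 & build j.+1 r]
  | _ => s
  end.

Lemma build_cons2 j a b r : build j [:: a, b & r] =
  if odd a != odd b then a :: f j (odd a) 0 :: build j.+1 (b :: r)
  else [:: a, f j (odd a) 0, f j (~~ odd a) 0, f j (~~ odd a) 1 & build j.+1 (b :: r)].
Proof. by []. Qed.
Lemma build_1 j a : build j [:: a] = [:: a]. Proof. by []. Qed.
Arguments build : simpl never.

Fixpoint alt2 (s : seq V) : bool :=
  match s with
  | x :: ((y :: z :: _) as r) => (odd x != odd z) && alt2 r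
  | _ => true
  end.
Lemma alt2_cons3 x y z u : alt2 [:: x, y, z & u] = (odd x != odd z) && alt2 [:: y, z & u].
Proof. by []. Qed.
Lemma alt2_2 x y : alt2 [:: x; y] = true. Proof. by []. Qed.
Arguments alt2 : simpl never.

Fixpoint nocons (s : seq V) : bool :=
  match s with
  | x :: ((y :: _) as r) => ((x \notin S) || (y \notin S)) && nocons r
  | _ => true
  end.
Lemma nocons_cons2 x y u : nocons [:: x, y & u] = ((x \notin S) || (y \notin S)) && nocons (y :: u).
Proof. by []. Qed.
Lemma nocons_1 x : nocons [:: x] = true. Proof. by []. Qed.
Arguments nocons : simpl never.

Lemma alt2_nth (x0 : V) s : alt2 s -> forall t, t.+2 < size s -> odd (nth x0 s t) != odd (nth x0 s t.+2).
Proof.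
elim: s => [|x s IH] //; case: s IH => [|y [|z r]] IH //.
rewrite alt2_cons3 => /andP [H1 H2] [|t] Ht //.
exact: (IH H2 t).
Qed.

Lemma nocons_nth (x0 : V) s : nocons s -> forall t, t.+1 < size s -> (nth x0 s t \notin S) || (nth x0 s t.+1 \notin S).
Proof.
elim: s => [|x s IH] //; case: s IH => [|y r] IH //.
rewrite nocons_cons2 => /andP [H1 H2] [|t] Ht //.
exact: (IH H2 t).
Qed.

Lemma mem_build j s x : x \in build j s -> x \in s \/
  exists j' bb t, [/\ j <= j', j' < j + (size s).-1, t < 2 & x = f j' bb t].
Proof.
elim: s j => [|a r IH] j //; case: r IH => [|b r] IH; first by rewrite build_1; left.
rewrite build_cons2; case: ifP => _; rewrite !inE.
- case/orP => [->|/orP [/eqP->|/IH [H|[j' [bb [t [H1 H2 H3 H4]]]]]]]; first by left.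
  + by right; exists j, (odd a), 0; split => //=; lia.
  + by left; move: H; rewrite !inE => /orP[->|->]; rewrite ?orbT.
  + by right; exists j', bb, t; split => //=; move: H2 => /=; lia.
- case/orP => [->|/orP [/eqP->|/orP [/eqP->|/orP [/eqP->|/IH [H|[j' [bb [t [H1 H2 H3 H4]]]]]]]]]; first by left.
  + by right; exists j, (odd a), 0; split => //=; lia.
  + by right; exists j, (~~ odd a), 0; split => //=; lia.
  + by right; exists j, (~~ odd a), 1; split => //=; lia.
  + by left; move: H; rewrite !inE => /orP[->|->]; rewrite ?orbT.
  + by right; exists j', bb, t; split => //=; move: H2 => /=; lia.
Qed.

Lemma subset_build j s x : x \in s -> x \in build j s.
Proof.
elim: s j => [|a r IH] j //; case: r IH => [|b r] IH; first by rewrite build_1.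
rewrite build_cons2 inE => /orP [/eqP->|H]; case: ifP => _; rewrite ?mem_head //;
  by rewrite !inE IH ?orbT.
Qed.

Lemma head_build j b r : j + (size r) <= J -> exists u, build j (b :: r) = b :: u /\
  (u = [::] \/ exists y u', u = y :: u' /\ odd y = odd b).
Proof.
case: r => [|c r] Hj; first by exists [::]; rewrite build_1; split => //; left.
rewrite build_cons2; have [Hp _] := Hf (odd b) (t := 0) (j := j) ltac:(move: Hj => /=; lia) erefl.
case: ifP => _; (eexists; split; [reflexivity | right; do 2 eexists; split; [reflexivity | by []]]).
Qed.

Lemma alt2_build j s : j + (size s).-1 <= J -> alt2 (build j s).
Proof.
elim: s j => [|a r IH] j //; case: r IH => [|b r] IH Hj; first by rewrite build_1.
have Hj' : j < J by move: Hj => /=; lia.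
have [u [Hb Hu]] := head_build (j := j.+1) (r := r) b ltac:(move: Hj => /=; lia).
have := IH j.+1 ltac:(move: Hj => /=; lia); rewrite Hb => IHb.
have [P0 _] := Hf (odd a) (t := 0) Hj' erefl.
have [P1 _] := Hf (~~ odd a) (t := 0) Hj' erefl.
have [P2 _] := Hf (~~ odd a) (t := 1) Hj' erefl.
rewrite build_cons2 Hb; case: ifP => Hab.
- case: Hu IHb => [->|[y [u' [-> Hy]]]] IHb.
    by rewrite alt2_cons3 alt2_2 Hab.
  by rewrite !alt2_cons3 P0 Hy Hab IHb.
- move/negbFE/eqP: Hab => Hab.
  case: Hu IHb => [->|[y [u' [-> Hy]]]] IHb.
    rewrite !alt2_cons3 alt2_2 P0 P1 P2 -Hab; by case: (odd a).
  rewrite !alt2_cons3 P0 P1 P2 Hy -Hab IHb; by case: (odd a).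
Qed.

Lemma nocons_build j s : j + (size s).-1 <= J -> nocons (build j s).
Proof.
elim: s j => [|a r IH] j //; case: r IH => [|b r] IH Hj; first by rewrite build_1.
have Hj' : j < J by move: Hj => /=; lia.
have IHb := IH j.+1 ltac:(move: Hj => /=; lia).
have [_ N0] := Hf (odd a) (t := 0) Hj' erefl.
have [_ N1] := Hf (~~ odd a) (t := 0) Hj' erefl.
have [_ N2] := Hf (~~ odd a) (t := 1) Hj' erefl.
have [u [Hb _]] := head_build (j := j.+1) (r := r) b ltac:(move: Hj => /=; lia).
rewrite Hb in IHb; rewrite build_cons2 Hb; case: ifP => _;
  by rewrite !nocons_cons2 ?N0 ?N1 ?N2 ?orbT IHb.
Qed.

Lemma pool_notin j c t0 j0 s : j < J -> t0 < 2 -> {subset s <= S} -> j < j0 ->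
  j0 + (size s).-1 <= J -> f j c t0 \notin build j0 s.
Proof.
move=> Hj Ht Hs Hj0 Hb; apply/negP => /mem_build [H|[j' [bb [t [H1 H2 H3 H4]]]]].
  by have [_ /negP] := Hf c Hj Ht; apply; apply: Hs.
have Hj2 : j' < J := leq_trans H2 Hb.
have [E _ _] := Hinj Hj Hj2 Ht H3 H4; lia.
Qed.

Lemma S_notin a j0 s : a \in S -> a \notin s -> j0 + (size s).-1 <= J -> a \notin build j0 s.
Proof.
move=> Ha Has Hb; apply/negP => /mem_build [H|[j' [bb [t [H1 H2 H3 H4]]]]].
  by rewrite H in Has.
have [_ /negP] := Hf bb (j := j') (leq_trans H2 Hb) H3; apply; by rewrite -H4.
Qed.

Lemma uniq_build j s : {subset s <= S} -> uniq s -> j + (size s).-1 <= J -> uniq (build j s).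
Proof.
elim: s j => [|a r IH] j //; case: r IH => [|b r] IH Hs Hu Hj; first by rewrite build_1.
have Hj' : j < J by move: Hj => /=; lia.
have Hs' : {subset b :: r <= S} by move=> x Hx; apply: Hs; rewrite inE Hx orbT.
have Hb' : j.+1 + (size (b :: r)).-1 <= J by move: Hj => /=; lia.
move: Hu => /= /andP [Ha Hu].
have IHb := IH j.+1 Hs' Hu Hb'.
have HaS : a \in S by apply: Hs; rewrite mem_head.
have [_ N0] := Hf (odd a) (t := 0) Hj' erefl.
have [_ N1] := Hf (~~ odd a) (t := 0) Hj' erefl.
have [_ N2] := Hf (~~ odd a) (t := 1) Hj' erefl.
have Pn := fun c t0 (Ht : t0 < 2) => @pool_notin j c t0 j.+1 (b :: r) Hj' Ht Hs' (ltnSn j) Hb'.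
have An := S_notin HaS Ha Hb'.
have Fa : forall x, x \notin S -> a != x by move=> x Hx; apply: contraNneq Hx => <-.
have Ff : forall c c' t t', t < 2 -> t' < 2 -> (c, t) != (c', t') -> f j c t != f j c' t'.
  move=> c c' t t' Ht Ht' Hne; apply/eqP => /Hinj [] // _ E1 E2.
  by rewrite E1 E2 eqxx in Hne.
rewrite build_cons2; case: ifP => _ /=.
- by rewrite !inE negb_or Fa // An Pn // IHb.
- rewrite !inE !negb_or !Fa // An !Pn // IHb !Ff //=; by case: (odd a).
Qed.

End Build.

End Gen.

Lemma count_par b m : count (fun i => odd i == b) (iota 0 m.*2) = m.
Proof.
elim: m => [|m IH]; first by [].
rewrite doubleS -addn2 iotaD count_cat IH /= odd_double.
by case: b {IH}; rewrite ?addn0 ?addn1.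
Qed.

Lemma count_par_ge b n : n./2 <= count (fun i => odd i == b) (iota 0 n).
Proof.
by rewrite -{2}(odd_double_half n) addnC iotaD count_cat count_par leq_addr.
Qed.

Lemma count_split T (a b : pred T) s : count b s <= count (fun x => a x && b x) s + count (fun x => ~~ a x) s.
Proof. elim: s => //= x s IH; case: (a x); case: (b x) => /=; lia. Qed.

Lemma card_count n (S : {set 'I_n}) : count (fun x => x \in S) (enum 'I_n) = #|S|.
Proof. by rewrite enumT cardE /enum_mem size_filter. Qed.

Lemma idx_range l k' i j t : i < l -> j < k' -> t < 2 -> (i * k' + j).*2 + t < (l * k').*2.
Proof. move=> Hi Hj Ht; rewrite -!muln2; nia. Qed.

Lemma idx_inj k' i j t i' j' t' : j < k' -> t < 2 -> j' < k' -> t' < 2 ->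
  (i * k' + j).*2 + t = (i' * k' + j').*2 + t' -> [/\ i = i', j = j' & t = t'].
Proof.
move=> Hj Ht Hj' Ht'; rewrite -!muln2 => E.
have Et : t = t' by lia.
have Eq : i * k' + j = i' * k' + j' by lia.
have Ei : i = i'.
  case: (ltngtP i i') => // H.
  - have : (i.+1) * k' <= i' * k' by rewrite leq_mul2r H orbT.
    lia.
  - have : (i'.+1) * k' <= i * k' by rewrite leq_mul2r H orbT.
    lia.
split => //; lia.
Qed.

Lemma colorable n k' l : 2 <= k' -> (l * k').*2 + k'.+1 + 2 <= n./2 ->
  kl_colorable n k'.+1 l 2.
Proof.
move=> Hk Hn; exists (@pcol n) => S HS.
have n0 : 0 < n by move: Hn; rewrite -divn2; lia.
pose x0 : 'I_n := Ordinal n0.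
pose pool b := [seq x <- enum 'I_n | (x \notin S) && (odd x == b)].
have Hpool : forall b, (l * k').*2 <= size (pool b).
  move=> b; rewrite size_filter.
  have H1 := count_split (fun x : 'I_n => x \notin S) (fun x : 'I_n => odd x == b) (enum 'I_n).
  have H2 : count (fun x : 'I_n => odd x == b) (enum 'I_n) = count (fun i => odd i == b) (iota 0 n).
    by rewrite -val_enum_ord count_map.
  have H3 := count_par_ge b n.
  have H4 : count (fun x : 'I_n => ~~ (x \notin S)) (enum 'I_n) = #|S|.
    by rewrite -card_count; apply: eq_count => x; rewrite negbK.
  rewrite H4 H2 HS in H1; have H5 := leq_trans H3 H1.
  move: H5 Hn; set A := count _ _ => H5 Hn'.
  have : (l * k').*2 <= A by move: H5 Hn'; rewrite -!divn2 -!muln2; lia.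
  exact.
pose F (i : nat) j b t := nth x0 (pool b) ((i * k' + j).*2 + t).
have Hpoolmem : forall b r, r < size (pool b) ->
    (nth x0 (pool b) r \notin S) && (odd (nth x0 (pool b) r) == b).
  by move=> b r Hr; have := mem_nth x0 Hr; rewrite mem_filter => /andP [].
have Hf : forall i, i < l -> forall j b t, j < k' -> t < 2 ->
    odd (F i j b t) = b /\ F i j b t \notin S.
  move=> i Hi j b t Hj Ht.
  have /andP [H1 /eqP H2] := Hpoolmem b _ (leq_trans (idx_range Hi Hj Ht) (Hpool b)).
  by split.
have Hinj : forall i i' j j' b b' t t', i < l -> i' < l -> j < k' -> j' < k' ->
    t < 2 -> t' < 2 -> F i j b t = F i' j' b' t' -> [/\ i = i', j = j', b = b' & t = t'].
  move=> i i' j j' b b' t t' Hi Hi' Hj Hj' Ht Ht' Heq.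
  have [P1 _] := Hf i Hi j b t Hj Ht.
  have [P2 _] := Hf i' Hi' j' b' t' Hj' Ht'.
  have Eb : b = b' by rewrite -P1 -P2 Heq.
  subst b'; move: Heq; rewrite /F => /eqP.
  rewrite nth_uniq ?(filter_uniq _ (enum_uniq _)) //;
    try exact: (leq_trans (idx_range _ _ _) (Hpool b)).
  by move=> /eqP /(idx_inj Hj Ht Hj' Ht') [-> -> ->].
pose w (i : nat) := build (F i) 0 (enum S).
have Hsz : size (enum S) = k'.+1 by rewrite -cardE HS.
have HsS : {subset enum S <= S} by move=> x; rewrite mem_enum.
have Hb0 : 0 + (size (enum S)).-1 <= k' by rewrite Hsz.
have Hinji : forall i, i < l -> forall j j' b b' t t', j < k' -> j' < k' -> t < 2 -> t' < 2 ->
    F i j b t = F i j' b' t' -> [/\ j = j', b = b' & t = t'].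
  by move=> i Hi j j' b b' t t' Hj Hj' Ht Ht' /(Hinj _ _ _ _ _ _ _ _ Hi Hi Hj Hj' Ht Ht') [].
have Huniq : forall i, i < l -> uniq (w i).
  by move=> i Hi; apply: (uniq_build (Hf i Hi) (Hinji i Hi) HsS (enum_uniq _) Hb0).
have Halt : forall i, i < l -> alt2 (w i) by move=> i Hi; exact: (alt2_build (Hf i Hi) Hb0).
have Hnoc : forall i, i < l -> nocons S (w i) by move=> i Hi; exact: (nocons_build (Hf i Hi) Hb0).
have Hne : forall i, w i != [::].
  move=> i; have : nth x0 (enum S) 0 \in w i by apply: subset_build; apply: mem_nth; rewrite Hsz.
  by case: (w i).
have Hvert : forall i i' : 'I_l, i != i' -> forall x, x \in w i -> x \in w i' -> x \in S.
  move=> i i' Hii x /mem_build [H|[j [bb [t [_ Hj Ht ->]]]]]; first by move=> _; move: H; rewrite mem_enum.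
  move=> /mem_build [H|[j' [bb' [t' [_ Hj' Ht' E]]]]]; first by move: H; rewrite mem_enum.
  rewrite Hsz /= in Hj Hj'.
  have [E1 _ _ _] := Hinj _ _ _ _ _ _ _ _ (ltn_ord i) (ltn_ord i') Hj Hj' Ht Ht' E.
  by move: Hii; rewrite (ord_inj E1) eqxx.
exists (fun i => ([set x in w i], [set e in edges (w i)])); split.
- move=> i /=; have Htree := path_tree x0 (Hne i) (Huniq i (ltn_ord i)).
  split; split => //.
  + apply/subsetP => x Hx; rewrite inE; apply: subset_build; by rewrite mem_enum.
  + apply: (path_proper (x0 := x0) (Huniq i (ltn_ord i))) => t Ht.
    exact: alt2_nth (Halt i (ltn_ord i)) t Ht.
- move=> i i' Hii /=; split.
  + apply/setP => e; rewrite !inE; apply/negP.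
    move=> /andP [/(edgesP x0) [t Ht He] /(edgesP x0) [u Hu He']].
    have Hin : forall z, z \in e -> z \in w i' by move=> z; rewrite He' !inE => /orP [] /eqP ->; by [apply: mem_nth (ltnW Hu) | apply: mem_nth Hu].
    have Hin2 : forall z, z \in e -> z \in w i by move=> z; rewrite He !inE => /orP [] /eqP ->; by [apply: mem_nth (ltnW Ht) | apply: mem_nth Ht].
    have := nocons_nth x0 (Hnoc i (ltn_ord i)) Ht => /orP [] /negP; apply; apply: (Hvert i i' Hii);
      by [apply: Hin2; rewrite He !inE eqxx ?orbT | apply: Hin; rewrite He !inE eqxx ?orbT].
  + apply/setP => x; rewrite !inE; apply/andP/idP => [[H1 H2]|H]; first exact: Hvert H1 H2.
    by split; apply: subset_build; rewrite mem_enum.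
Qed.

Import Order.TTheory GRing.Theory Num.Theory.

Lemma lower n k l : 3 <= k -> 1 <= l -> k <= n -> forall c, kl_colorable n k l c -> 2 <= c.
Proof.
move=> Hk Hl Hkn c [pc Hc].
case: c pc Hc => [|[|c]] pc Hc //.
  by case: (pc set0).
exfalso.
have n0 : 0 < n by lia.
pose x0 : 'I_n := Ordinal n0.
pose s := take k (enum 'I_n).
have Hsu : uniq s by rewrite take_uniq ?enum_uniq.
have Hss : size s = k by rewrite size_take size_enum_ord; case: ltnP => //; lia.
pose S := [set x in s].
have HS : #|S| = k by rewrite cardsE; move/card_uniqP: Hsu => ->.
have [T [HT _]] := Hc S HS.
have [[Htree HSV] [_ Hprop]] := HT (Ordinal Hl).
move: (T _) Htree HSV Hprop => [VT ET] /= [_ _ Hcon _] HSV Hprop.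
have E1 : forall u v : 'I_1, u = v by move=> [[|//] ?] [[|//] ?]; apply: val_inj.
have Hm : forall x y z, adj ET x y -> adj ET x z -> y = z.
  move=> x y z /andP [Hxy Hy] /andP [Hxz Hz]; apply/eqP/negPn/negP => Hyz.
  have Hne : [set x; y] != [set x; z].
    apply/negP => /eqP E; have : y \in [set x; z] by rewrite -E !inE eqxx orbT.
    by rewrite !inE (negbTE Hyz) eq_sym (negbTE Hxy).
  have Hi : [set x; y] :&: [set x; z] != set0 by apply/set0Pn; exists x; rewrite !inE eqxx.
  have := Hprop _ _ Hy Hz Hne Hi.
  by rewrite (E1 (pc [set x; y]) (pc [set x; z])) eqxx.
pose a := nth x0 s 0; pose b := nth x0 s 1; pose c' := nth x0 s 2.
have Ea : forall i j, i < k -> j < k -> (nth x0 s i == nth x0 s j) = (i == j).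
  by move=> i j Hi Hj; rewrite nth_uniq // Hss.
have aS : forall i, i < k -> nth x0 s i \in VT.
  by move=> i Hi; apply: (subsetP HSV); rewrite inE mem_nth // Hss.
pose Q := [pred z | (z == a) || adj ET a z].
have Hcl : closed (adj ET) Q.
  have H1 : forall x y, adj ET x y -> x \in Q -> y \in Q.
    move=> x y Hxy; rewrite !inE => /orP [/eqP Ex|Hax]; first by rewrite -Ex Hxy orbT.
    rewrite (Hm x y a Hxy) ?eqxx //; by rewrite adj_sym.
  move=> x y Hxy; apply/idP/idP; first exact: H1.
  by apply: H1; rewrite adj_sym.
have QP : forall i, 0 < i < k -> adj ET a (nth x0 s i).
  move=> i /andP [Hi0 Hi].
  have := closed_connect Hcl (Hcon a (nth x0 s i) (aS 0 ltac:(lia)) (aS i Hi)).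
  rewrite !inE eqxx /= => /esym /orP [|//].
  by rewrite /a Ea //; lia.
have := Hm _ _ _ (QP 1 ltac:(lia)) (QP 2 ltac:(lia)).
move/eqP; rewrite Ea //; lia.
Qed.

Theorem theorem2p9 (k l n : nat) :
  3 <= k -> 1 <= l ->
  (2%:R * (((l%:R * (k%:R - 1) + k%:R) ^+ 4 - 1) / ((l%:R + 1) * (k%:R - 1)))
     - 1 <= (n%:R : rat))%R ->
  px_complete_eq n k l 2.
Proof.
move=> Hk Hl Hrat.
case: k Hk Hrat => [|k'] // Hk Hrat.
have Hk' : 2 <= k' by [].
pose M := l * k' + k' + 1.
have HN : 2 * (M ^ 3 + M ^ 2 + M + 1) <= n.+1.
  rewrite -(ler_nat rat).
  move: Hrat; rewrite -[(k'.+1%:R)%R]natr1 addrK.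
  set x := (l%:R : rat); set y := (k'%:R : rat).
  have Hy : (0 < y)%R by rewrite ltr0n; lia.
  have Hx : (0 <= x)%R by rewrite ler0n.
  have D0 : ((x + 1) * y != 0)%R by apply: mulf_neq0; rewrite gt_eqF //; lra.
  rewrite (_ : ((x * y + (y + 1)) ^+ 4 - 1 =
     ((x * y + y + 1) ^+ 3 + (x * y + y + 1) ^+ 2 + (x * y + y + 1) + 1) * ((x + 1) * y))%R);
    last by ring.
  rewrite mulfK //.
  have -> : ((2 * (M ^ 3 + M ^ 2 + M + 1))%:R : rat) =
    (2 * ((x * y + y + 1) ^+ 3 + (x * y + y + 1) ^+ 2 + (x * y + y + 1) + 1))%R.
    by rewrite /M /x /y !(natrD, natrM, natrX).
  rewrite -[(n.+1%:R)%R]natr1; lra.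
have HM : 3 <= M by rewrite /M; nia.
have H3 : 9 * M <= M ^ 3.
  by rewrite (_ : M ^ 3 = M * M * M) ?expnS ?expn1 ?mulnA //; nia.
split.
  apply: colorable => //; rewrite -divn2; move: HN H3; rewrite /M; nia.
apply: lower => //; move: HN H3; rewrite /M; nia.
Qed.
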